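(* Let $T$ be an arbitrary triangle, $\Gamma_{h,T}$ an open line segment with endpoints on $\partial T$ dividing $T$ into two nonempty open parts $T_h^\pm$, and $\mu^\pm>0$. Then every pair $(\mathbf{v},q)\in \mathbf{V}M_h^{IFE}(T)$ is uniquely determined by the values $N_{i,T}(\mathbf{v},q)$, $i=1,\dots,7$. Moreover, $$(\mathbf{v},q)=(\mathbf{v}^{J_0},q^{J_0})+(c_2\mathbf{v}^{J_2},c_1q^{J_1}),$$ where $\mathbf{v}^{J_0}=\sum_{i=1}^6N_{i,T}(\mathbf{v},q)\boldsymbol{\phi}_{i,T}$, $q^{J_0}=N_{7,T}(\mathbf{v},q)$, $$c_1=\sigma(\mu^--\mu^+,\mathbf{v}^{J_0},0)\mathbf{n}_h\cdot\mathbf{n}_h,\qquad c_2=\frac{\sigma(\mu^-/\mu^+-1,\mathbf{v}^{J_0},0)\mathbf{n}_h\cdot\mathbf{t}_h}{1+(\mu^-/\mu^+-1)\nabla\pi^{CR}_{h,T}w\cdot\mathbf{n}_h},$$ $q^{J_1}=z-\pi^0_{h,T}z$ and $\mathbf{v}^{J_2}=(w-\pi^{CR}_{h,T}w)\mathbf{t}_h$.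
   Context: $\mathbf{n}_h$ is the unit normal of $\Gamma_{h,T}$ pointing into $T_h^+$, $\mathbf{t}_h$ is $\mathbf{n}_h$ rotated $90^\circ$ clockwise. $\sigma(\mu,\mathbf{v},q)=2\mu\boldsymbol{\epsilon}(\mathbf{v})-q\mathbb{I}$, $\boldsymbol{\epsilon}(\mathbf{v})=\frac12(\nabla\mathbf{v}+(\nabla\mathbf{v})^T)$ (with $\mu$ any real number). For polynomials $g^\pm$ on $T$, $[\![g^\pm]\!]=g^+-g^-$. The local IFE space $\mathbf{V}M_h^{IFE}(T)$ is the set of pairs $(\mathbf{v},q)$ with $\mathbf{v}=\mathbf{v}^\pm$, $q=q^\pm$ on $T_h^\pm$, where $\mathbf{v}^\pm\in P_1(T)^2$, $q^\pm\in P_0(T)$ satisfy $[\![\sigma(\mu^\pm,\mathbf{v}^\pm,q^\pm)\mathbf{n}_h]\!]=\mathbf{0}$, $\mathbf{v}^+=\mathbf{v}^-$ on $\Gamma_{h,T}$, and $[\![\nabla\cdot\mathbf{v}^\pm]\!]=0$. With edges $e_1,e_2,e_3$ and $\mathbf{v}=(v_1,v_2)^T$: $N_{i,T}(\mathbf{v},q)=|e_i|^{-1}\int_{e_i}v_1$, $N_{3+i,T}=|e_i|^{-1}\int_{e_i}v_2$ ($i=1,2,3$), $N_{7,T}=|T|^{-1}\int_Tq$. $\lambda_{i,T}\in P_1(T)$ are the Crouzeix–Raviart basis functions, $|e_j|^{-1}\int_{e_j}\lambda_{i,T}=\delta_{ij}$, and $\boldsymbol{\phi}_{i,T}=(\lambda_{i,T},0)^T$,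 $\boldsymbol{\phi}_{i+3,T}=(0,\lambda_{i,T})^T$, $i=1,2,3$. $\pi^{CR}_{h,T}$ is the linear interpolant matching the three edge integrals, $\pi^0_{h,T}$ the mean over $T$. $z=-1$ on $T_h^+$, $z=0$ on $T_h^-$; $w=\operatorname{dist}(\cdot,\Gamma_{h,T})$ on $T_h^+$, $w=0$ on $T_h^-$. *)

(* Defs.v *)
From Stdlib Require Import Reals List.
From Coquelicot Require Import Coquelicot.
Open Scope R_scope.

Definition vec := (R * R)%type.
Definition v2add (x y : vec) : vec := (fst x + fst y, snd x + snd y).
Definition v2sub (x y : vec) : vec := (fst x - fst y, snd x - snd y).
Definition v2scal (c : R) (x : vec) : vec := (c * fst x, c * snd x).
Definition v2dot (x y : vec) : R := fst x * fst y + snd x * snd y.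
Definition rot_cw (x : vec) : vec := (snd x, - fst x).

(** matrices stored by rows *)
Definition mat := (vec * vec)%type.
Definition mvec (A : mat) (x : vec) : vec := (v2dot (fst A) x, v2dot (snd A) x).
Definition mtr (A : mat) : mat :=
  ((fst (fst A), fst (snd A)), (snd (fst A), snd (snd A))).
Definition madd (A B : mat) : mat := (v2add (fst A) (fst B), v2add (snd A) (snd B)).
Definition mscal (c : R) (A : mat) : mat := (v2scal c (fst A), v2scal c (snd A)).
Definition mid : mat := ((1, 0), (0, 1)).

Record P1 := mkP1 { p1c : R ; p1g : vec }.
Definition p1eval (p : P1) (x : vec) : R := p1c p + v2dot (p1g p) x.
Definition p1grad (p : P1) : vec := p1g p.
Definition p1add (p q : P1) : P1 := mkP1 (p1c p + p1c q) (v2add (p1g p) (p1g q)).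
Definition p1scal (c : R) (p : P1) : P1 := mkP1 (c * p1c p) (v2scal c (p1g p)).
Definition p1zero : P1 := mkP1 0 (0, 0).

Definition P1v := (P1 * P1)%type.
Definition p1veval (v : P1v) (x : vec) : vec := (p1eval (fst v) x, p1eval (snd v) x).
Definition p1vadd (v w : P1v) : P1v := (p1add (fst v) (fst w), p1add (snd v) (snd w)).
Definition p1vscal (c : R) (v : P1v) : P1v := (p1scal c (fst v), p1scal c (snd v)).
Definition p1vzero : P1v := (p1zero, p1zero).
(** (grad v)_{ij} = d_j v_i : row i is grad v_i *)
Definition p1vgrad (v : P1v) : mat := (p1grad (fst v), p1grad (snd v)).
Definition p1vdiv (v : P1v) : R := fst (p1grad (fst v)) + snd (p1grad (snd v)).
Definition epsilon (v : P1v) : mat :=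
  mscal (1/2) (madd (p1vgrad v) (mtr (p1vgrad v))).
Definition sigma (mu : R) (v : P1v) (q : R) : mat :=
  madd (mscal (2 * mu) (epsilon v)) (mscal (- q) mid).

(** * Geometry: triangle with vertices A1 A2 A3 and the interface line
      {x | n . x = d}, with n a unit normal. *)
Record geom := mkGeom { gA1 : vec ; gA2 : vec ; gA3 : vec ; gn : vec ; gd : R }.

Definition tri_map (g : geom) (s t : R) : vec :=
  v2add (gA1 g) (v2add (v2scal s (v2sub (gA2 g) (gA1 g)))
                       (v2scal t (v2sub (gA3 g) (gA1 g)))).
Definition tri_nondeg (g : geom) : Prop :=
  let u := v2sub (gA2 g) (gA1 g) in let w := v2sub (gA3 g) (gA1 g) in
  fst u * snd w - snd u * fst w <> 0.
Definition in_Tint (g : geom) (x : vec) : Prop :=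
  exists s t, 0 < s /\ 0 < t /\ s + t < 1 /\ x = tri_map g s t.
(** T_h^+, T_h^- and Gamma_{h,T}; n_h points into T_h^+ *)
Definition in_Tp (g : geom) (x : vec) : Prop := in_Tint g x /\ gd g < v2dot (gn g) x.
Definition in_Tm (g : geom) (x : vec) : Prop := in_Tint g x /\ v2dot (gn g) x < gd g.
Definition on_Gamma (g : geom) (x : vec) : Prop := in_Tint g x /\ v2dot (gn g) x = gd g.
Definition tangent (g : geom) : vec := rot_cw (gn g).

Definition edge (g : geom) (i : nat) : vec * vec :=
  match i with
  | 1%nat => (gA2 g, gA3 g)
  | 2%nat => (gA3 g, gA1 g)
  | _ => (gA1 g, gA2 g)
  end.
(** |e|^{-1} \int_e f, via the affine (constant-speed) parametrization *)
Definition edge_mean (e : vec * vec) (f : vec -> R) : R :=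
  RInt (fun t => f (v2add (fst e) (v2scal t (v2sub (snd e) (fst e))))) 0 1.
(** |T|^{-1} \int_T f, via the affine map from the reference triangle
    (|T| = |det J|/2, so the Jacobian cancels) *)
Definition tri_mean (g : geom) (f : vec -> R) : R :=
  2 * RInt (fun s => RInt (fun t => f (tri_map g s t)) 0 (1 - s)) 0 1.

Definition pw {A : Type} (g : geom) (fp fm : vec -> A) (x : vec) : A :=
  if Rlt_dec (gd g) (v2dot (gn g) x) then fp x else fm x.

Record ife := mkIFE { vp : P1v ; vm : P1v ; qp : R ; qm : R }.
Definition vfun (g : geom) (D : ife) : vec -> vec := pw g (p1veval (vp D)) (p1veval (vm D)).
Definition qfun (g : geom) (D : ife) : vec -> R := pw g (fun _ => qp D) (fun _ => qm D).

Definition in_IFE (g : geom) (mup mum : R) (D : ife) : Prop :=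
  v2sub (mvec (sigma mup (vp D) (qp D)) (gn g)) (mvec (sigma mum (vm D) (qm D)) (gn g)) = (0, 0)
  /\ (forall x, on_Gamma g x -> p1veval (vp D) x = p1veval (vm D) x)
  /\ p1vdiv (vp D) - p1vdiv (vm D) = 0.

Definition Ndof (g : geom) (D : ife) (i : nat) : R :=
  match i with
  | 1%nat | 2%nat | 3%nat => edge_mean (edge g i) (fun x => fst (vfun g D x))
  | 4%nat | 5%nat | 6%nat => edge_mean (edge g (i - 3)) (fun x => snd (vfun g D x))
  | 7%nat => tri_mean g (qfun g D)
  | _ => 0
  end.

Definition is_CR_basis (g : geom) (lam : nat -> P1) : Prop :=
  forall i j, (1 <= i <= 3)%nat -> (1 <= j <= 3)%nat ->
    edge_mean (edge g j) (p1eval (lam i)) = if Nat.eqb i j then 1 else 0.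

Definition phi (lam : nat -> P1) (i : nat) : P1v :=
  if Nat.leb i 3 then (lam i, p1zero) else (p1zero, lam (i - 3)%nat).

Definition piCR (g : geom) (lam : nat -> P1) (f : vec -> R) : P1 :=
  fold_right (fun i acc => p1add (p1scal (edge_mean (edge g i) f) (lam i)) acc)
    p1zero (List.seq 1 3).
Definition pi0 (g : geom) (f : vec -> R) : R := tri_mean g f.

Definition zfun (g : geom) : vec -> R := pw g (fun _ => -1) (fun _ => 0).
Definition wfun (g : geom) : vec -> R :=
  pw g (fun y => Rabs (v2dot (gn g) y - gd g)) (fun _ => 0).

Definition vJ0 (g : geom) (lam : nat -> P1) (D : ife) : P1v :=
  fold_right (fun i acc => p1vadd (p1vscal (Ndof g D i) (phi lam i)) acc)
    p1vzero (List.seq 1 6).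
Definition qJ0 (g : geom) (D : ife) : R := Ndof g D 7.
Definition qJ1 (g : geom) (x : vec) : R := zfun g x - pi0 g (zfun g).
Definition vJ2 (g : geom) (lam : nat -> P1) (x : vec) : vec :=
  v2scal (wfun g x - p1eval (piCR g lam (wfun g)) x) (tangent g).

Definition cJ1 (g : geom) (lam : nat -> P1) (mup mum : R) (D : ife) : R :=
  v2dot (mvec (sigma (mum - mup) (vJ0 g lam D) 0) (gn g)) (gn g).
Definition c2_den (g : geom) (lam : nat -> P1) (mup mum : R) : R :=
  1 + (mum / mup - 1) * v2dot (p1grad (piCR g lam (wfun g))) (gn g).
Definition cJ2 (g : geom) (lam : nat -> P1) (mup mum : R) (D : ife) : R :=
  v2dot (mvec (sigma (mum / mup - 1) (vJ0 g lam D) 0) (gn g)) (tangent g)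
  / c2_den g lam mup mum.

(* Main.v *)
From Stdlib Require Import Reals List Lra Psatz.
From Coquelicot Require Import Coquelicot.
Require Import Defs.
Open Scope R_scope.

Lemma is_RInt_aff (al be u v : R) :
  is_RInt (fun t => al + be*t) u v ((v-u)*(al + be*(u+v)/2)).
Proof.
  assert (H := is_RInt_derive (fun t => al*t + be*t*t/2) (fun t => al + be*t) u v).
  replace ((v-u)*(al + be*(u+v)/2)) with (minus (al*v + be*v*v/2) (al*u + be*u*u/2)).
  2:{ unfold minus, plus, opp; simpl. field. }
  apply H.
  - intros x _. auto_derive; auto. field.
  - intros x _. apply (ex_derive_continuous (fun t => al + be*t)). auto_derive. auto.
Qed.

Lemma RInt_aff (al be u v : R) :
  RInt (fun t => al + be*t) u v = (v-u)*(al + be*(u+v)/2).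
Proof. apply is_RInt_unique, is_RInt_aff. Qed.

Lemma cont_aff (al be x : R) : continuous (fun t => al + be*t) x.
Proof. apply (ex_derive_continuous (fun t => al + be*t)). auto_derive. auto. Qed.

Lemma Rmax_abs (x y : R) : Rmax x y = (x + y + Rabs (x - y))/2.
Proof. unfold Rmax, Rabs. destruct Rle_dec, Rcase_abs; lra. Qed.
Lemma Rmin_abs (x y : R) : Rmin x y = (x + y - Rabs (x - y))/2.
Proof. unfold Rmin, Rabs. destruct Rle_dec, Rcase_abs; lra. Qed.

Lemma cont_max (f h : R -> R) x : continuous f x -> continuous h x ->
  continuous (fun t => Rmax (f t) (h t)) x.
Proof.
  intros Hf Hh.
  apply (continuous_ext (fun t => (f t + h t + Rabs (f t - h t))/2)).
  { intros; rewrite Rmax_abs; auto. }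
  apply (continuous_mult (fun t => f t + h t + Rabs (f t - h t)) (fun _ => /2)).
  2: apply continuous_const.
  apply (continuous_plus (fun t => f t + h t) (fun t => Rabs (f t - h t))).
  apply (continuous_plus f h); auto.
  apply continuous_Rabs_comp.
  apply (continuous_plus f (fun t => opp (h t))); auto.
  apply (continuous_opp h); auto.
Qed.
Lemma cont_min (f h : R -> R) x : continuous f x -> continuous h x ->
  continuous (fun t => Rmin (f t) (h t)) x.
Proof.
  intros Hf Hh.
  apply (continuous_ext (fun t => (f t + h t + (- Rabs (f t - h t)))/2)).
  { intros; rewrite Rmin_abs; auto. }
  apply (continuous_mult (fun t => f t + h t + - Rabs (f t - h t)) (fun _ => /2)).
  2: apply continuous_const.
  apply (continuous_plus (fun t => f t + h t) (fun t => opp (Rabs (f t - h t)))).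
  apply (continuous_plus f h); auto.
  apply (continuous_opp (fun t => Rabs (f t - h t))).
  apply continuous_Rabs_comp.
  apply (continuous_plus f (fun t => opp (h t))); auto.
  apply (continuous_opp h); auto.
Qed.

Definition psi (a b : R) := RInt (fun t => Rmax (a + (b-a)*t) 0) 0 1.

Lemma cont_rmaxaff a be x : continuous (fun t => Rmax (a + be*t) 0) x.
Proof. apply (cont_max (fun t => a + be*t) (fun _ => 0)). apply cont_aff. apply continuous_const. Qed.

Lemma ex_rmaxaff a be u v : ex_RInt (fun t => Rmax (a + be*t) 0) u v.
Proof. apply (ex_RInt_continuous (V:=R_CompleteNormedModule)). intros; apply cont_rmaxaff. Qed.

Lemma psi_neg a b : a <= 0 -> b <= 0 -> psi a b = 0.
Proof.
  intros Ha Hb. unfold psi.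
  rewrite (RInt_ext _ (fun _ => 0)).
  - rewrite RInt_const. unfold scal; simpl; unfold mult; simpl. ring.
  - intros x Hx. rewrite Rmin_left in Hx by lra. rewrite Rmax_right in Hx by lra.
    apply Rmax_right. nra.
Qed.

Lemma psi_pn a b : 0 < a -> b <= 0 -> psi a b = a*a/(2*(a-b)).
Proof.
  intros Ha Hb. unfold psi. set (r := a/(a-b)).
  assert (Hrr : r*(a-b) = a) by (unfold r; field; lra).
  assert (Hr0 : 0 < r) by nra.
  assert (Hr1 : r <= 1) by nra.
  rewrite <- (RInt_Chasles _ 0 r 1) by apply ex_rmaxaff.
  rewrite (RInt_ext _ (fun t => a + (b-a)*t) 0 r).
  rewrite (RInt_ext _ (fun _ => 0) r 1).
  - rewrite RInt_const, RInt_aff. unfold plus, scal; simpl; unfold mult; simpl.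
    unfold r. field. lra.
  - intros x Hx. rewrite Rmin_left in Hx by lra. rewrite Rmax_right in Hx by lra.
    apply Rmax_right. nra.
  - intros x Hx. rewrite Rmin_left in Hx by lra. rewrite Rmax_right in Hx by lra.
    apply Rmax_left. nra.
Qed.

Lemma psi_np a b : a <= 0 -> 0 < b -> psi a b = b*b/(2*(b-a)).
Proof.
  intros Ha Hb. unfold psi. set (r := a/(a-b)).
  assert (Hrr : r*(a-b) = a) by (unfold r; field; lra).
  assert (Hr0' : 0 <= r) by nra.
  assert (Hr1 : r < 1) by nra.
  rewrite <- (RInt_Chasles _ 0 r 1) by apply ex_rmaxaff.
  rewrite (RInt_ext _ (fun _ => 0) 0 r).
  rewrite (RInt_ext _ (fun t => a + (b-a)*t) r 1).
  - rewrite RInt_const, RInt_aff. unfold plus, scal; simpl; unfold mult; simpl.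
    unfold r. field. lra.
  - intros x Hx. rewrite Rmin_left in Hx by lra. rewrite Rmax_right in Hx by lra.
    apply Rmax_left. nra.
  - intros x Hx. rewrite Rmin_left in Hx by lra. rewrite Rmax_right in Hx by lra.
    apply Rmax_right. nra.
Qed.

Lemma psi_flip a b : psi a b = (a+b)/2 + psi (-a) (-b).
Proof.
  unfold psi.
  assert (H1 := is_RInt_aff a (b-a) 0 1).
  assert (H2 := RInt_correct _ _ _ (ex_rmaxaff (-a) (-b - -a) 0 1)).
  assert (H3 := is_RInt_plus _ _ _ _ _ _ H1 H2).
  eapply is_RInt_ext in H3.
  2:{ intros x _. simpl. unfold plus; simpl. 
      instantiate (1 := fun x => Rmax (a + (b-a)*x) 0). simpl.
      unfold Rmax. destruct Rle_dec, Rle_dec; lra. }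
  rewrite (is_RInt_unique _ _ _ _ H3). unfold plus; simpl. field.
Qed.

Definition Pw (f1 f2 f3 : R) := exists rho C, 0 < rho < 1 /\
  psi f2 f3 = rho*(f2+f3)/2 + C /\ psi f3 f1 = rho*(f3+f1)/2 + C /\
  psi f1 f2 = rho*(f1+f2)/2 + C.

Lemma Pw_rot f1 f2 f3 : Pw f2 f3 f1 -> Pw f1 f2 f3.
Proof. intros (r & C & H1 & H2 & H3 & H4). exists r, C. tauto. Qed.

Lemma Pw_neg f1 f2 f3 : Pw (-f1) (-f2) (-f3) -> Pw f1 f2 f3.
Proof.
  intros (r & C & H1 & H2 & H3 & H4). exists (1-r), C.
  rewrite (psi_flip f2 f3), (psi_flip f3 f1), (psi_flip f1 f2), H2, H3, H4.
  repeat split; try lra; try ring.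
Qed.

Lemma Lone a b c : 0 < a -> b <= 0 -> c <= 0 -> b + c < 0 -> Pw a b c.
Proof.
  intros Ha Hb Hc Hbc. set (r := a*a/((a-b)*(a-c))).
  assert (Hr : r*((a-b)*(a-c)) = a*a) by (unfold r; field; lra).
  exists r, (-(r*(b+c)/2)).
  rewrite psi_neg by lra. rewrite psi_np by lra. rewrite psi_pn by lra.
  assert (0 < (a-b)*(a-c)) by nra.
  repeat split.
  - nra.
  - nra.
  - lra.
  - apply (Rmult_eq_reg_r (2*(a-c))); [|lra]. field_simplify; [|lra]. nra.
  - apply (Rmult_eq_reg_r (2*(a-b))); [|lra]. field_simplify; [|lra]. nra.
Qed.

Lemma Pw_all f1 f2 f3 : (0 < f1 \/ 0 < f2 \/ 0 < f3) -> (f1 < 0 \/ f2 < 0 \/ f3 < 0) ->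
  Pw f1 f2 f3.
Proof.
  intros Hp Hm.
  destruct (Rle_dec f1 0), (Rle_dec f2 0), (Rle_dec f3 0).
  - lra.
  - apply Pw_rot, Pw_rot, Lone; lra.
  - apply Pw_rot, Lone; lra.
  - apply Pw_neg, Lone; lra.
  - apply Lone; lra.
  - apply Pw_rot, Pw_neg, Lone; lra.
  - apply Pw_rot, Pw_rot, Pw_neg, Lone; lra.
  - lra.
Qed.

Definition ind (x : R) : R := if Rlt_dec 0 x then 1 else 0.
Definition clamp (x lo hi : R) := Rmax lo (Rmin x hi).

Lemma clamp_bounds x lo hi : lo <= hi -> lo <= clamp x lo hi <= hi.
Proof. unfold clamp, Rmax, Rmin. intros; repeat destruct Rle_dec; lra. Qed.

Lemma clamp_lt_l x lo hi s : lo <= hi -> lo < s -> s < clamp x lo hi -> s < x.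
Proof. unfold clamp, Rmax, Rmin. intros; repeat destruct Rle_dec; lra. Qed.
Lemma clamp_lt_r x lo hi s : lo <= hi -> clamp x lo hi < s -> s < hi -> x < s.
Proof. unfold clamp, Rmax, Rmin. intros; repeat destruct Rle_dec; lra. Qed.

Lemma ind_pos x : 0 < x -> ind x = 1.
Proof. unfold ind; destruct Rlt_dec; lra. Qed.
Lemma ind_npos x : x <= 0 -> ind x = 0.
Proof. unfold ind; destruct Rlt_dec; lra. Qed.

Lemma ex_cont (f : R -> R) lo hi : (forall x, continuous f x) -> ex_RInt f lo hi.
Proof. intros H. apply (ex_RInt_continuous (V:=R_CompleteNormedModule)). intros; apply H. Qed.

Lemma cont_scal_fun (c : R) (h : R -> R) : (forall x, continuous h x) -> forall x, continuous (fun s => c * h s) x.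
Proof. intros H x. apply (continuous_mult (fun _ => c) h). apply continuous_const. apply H. Qed.

Lemma ex_ind_h a b lo hi (h : R -> R) : lo <= hi -> (forall x, continuous h x) ->
  ex_RInt (fun s => ind (a + b*s) * h s) lo hi.
Proof.
  intros Hlh Hh.
  destruct (Req_dec b 0) as [Hb|Hb].
  - subst b. apply (ex_RInt_ext (fun s => ind a * h s)).
    + intros; f_equal; f_equal; ring.
    + apply ex_cont, cont_scal_fun, Hh.
  - set (r := -a/b). assert (Hr : r*b = -a) by (unfold r; field; auto).
    set (k := clamp r lo hi). assert (Hk : lo <= k <= hi) by (apply clamp_bounds; auto).
    apply (ex_RInt_Chasles _ lo k hi).
    + destruct (Rlt_dec 0 b).
      * apply (ex_RInt_ext (fun s => 0 * h s)).
        -- intros x Hx. rewrite Rmin_left in Hx by lra. rewrite Rmax_right in Hx by lra.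
           assert (x < r) by (apply (clamp_lt_l r lo hi); [lra|lra|apply Hx]).
           rewrite ind_npos; auto. nra.
        -- apply ex_cont, cont_scal_fun, Hh.
      * apply (ex_RInt_ext (fun s => 1 * h s)).
        -- intros x Hx. rewrite Rmin_left in Hx by lra. rewrite Rmax_right in Hx by lra.
           assert (x < r) by (apply (clamp_lt_l r lo hi); [lra|lra|apply Hx]).
           rewrite ind_pos; auto. assert (b < 0) by lra. nra.
        -- apply ex_cont, cont_scal_fun, Hh.
    + destruct (Rlt_dec 0 b).
      * apply (ex_RInt_ext (fun s => 1 * h s)).
        -- intros x Hx. rewrite Rmin_left in Hx by lra. rewrite Rmax_right in Hx by lra.
           assert (r < x) by (apply (clamp_lt_r r lo hi); [lra|apply Hx|lra]).
           rewrite ind_pos; auto. nra.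
        -- apply ex_cont, cont_scal_fun, Hh.
      * apply (ex_RInt_ext (fun s => 0 * h s)).
        -- intros x Hx. rewrite Rmin_left in Hx by lra. rewrite Rmax_right in Hx by lra.
           assert (r < x) by (apply (clamp_lt_r r lo hi); [lra|apply Hx|lra]).
           rewrite ind_npos; auto. assert (b < 0) by lra. nra.
        -- apply ex_cont, cont_scal_fun, Hh.
Qed.

Definition mI (a b lo hi : R) : R :=
  if Rlt_dec 0 b then hi - clamp (-a/b) lo hi else clamp (-a/b) lo hi - lo.

Lemma RInt_ind a b lo hi : lo <= hi -> b <> 0 ->
  RInt (fun t => ind (a + b*t)) lo hi = mI a b lo hi.
Proof.
  intros Hlh Hb.
  set (r := -a/b). assert (Hr : r*b = -a) by (unfold r; field; auto).
  set (k := clamp r lo hi). assert (Hk : lo <= k <= hi) by (apply clamp_bounds; auto).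
  assert (E1 : ex_RInt (fun t => ind (a + b*t)) lo k).
  { apply (ex_RInt_ext (fun t => ind (a + b*t) * 1)). intros; apply Rmult_1_r.
    apply ex_ind_h. lra. intros; apply continuous_const. }
  assert (E2 : ex_RInt (fun t => ind (a + b*t)) k hi).
  { apply (ex_RInt_ext (fun t => ind (a + b*t) * 1)). intros; apply Rmult_1_r.
    apply ex_ind_h. lra. intros; apply continuous_const. }
  rewrite <- (RInt_Chasles _ lo k hi E1 E2).
  unfold mI. fold r. fold k.
  destruct (Rlt_dec 0 b).
  - rewrite (RInt_ext _ (fun _ => 0) lo k).
    rewrite (RInt_ext _ (fun _ => 1) k hi).
    + rewrite !RInt_const. unfold plus, scal; simpl; unfold mult; simpl. ring.
    + intros x Hx. rewrite Rmin_left in Hx by lra. rewrite Rmax_right in Hx by lra.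
      assert (r < x) by (apply (clamp_lt_r r lo hi); [lra|apply Hx|lra]).
      rewrite ind_pos; auto. nra.
    + intros x Hx. rewrite Rmin_left in Hx by lra. rewrite Rmax_right in Hx by lra.
      assert (x < r) by (apply (clamp_lt_l r lo hi); [lra|lra|apply Hx]).
      rewrite ind_npos; auto. nra.
  - rewrite (RInt_ext _ (fun _ => 1) lo k).
    rewrite (RInt_ext _ (fun _ => 0) k hi).
    + rewrite !RInt_const. unfold plus, scal; simpl; unfold mult; simpl. ring.
    + intros x Hx. rewrite Rmin_left in Hx by lra. rewrite Rmax_right in Hx by lra.
      assert (r < x) by (apply (clamp_lt_r r lo hi); [lra|apply Hx|lra]).
      rewrite ind_npos; auto. assert (b < 0) by lra. nra.
    + intros x Hx. rewrite Rmin_left in Hx by lra. rewrite Rmax_right in Hx by lra.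
      assert (x < r) by (apply (clamp_lt_l r lo hi); [lra|lra|apply Hx]).
      rewrite ind_pos; auto. assert (b < 0) by lra. nra.
Qed.

Lemma ex_ind a b lo hi : lo <= hi -> ex_RInt (fun t => ind (a + b*t)) lo hi.
Proof.
  intros H. apply (ex_RInt_ext (fun t => ind (a + b*t) * 1)). intros; apply Rmult_1_r.
  apply ex_ind_h; auto. intros; apply continuous_const.
Qed.

Definition Ofun (c0 c1 c2 : R) (s : R) : R :=
  RInt (fun t => ind ((c0 + c1*s) + c2*t)) 0 (1 - s).

Lemma cont_clamp (f lo hi : R -> R) x : continuous f x -> continuous lo x -> continuous hi x ->
  continuous (fun s => clamp (f s) (lo s) (hi s)) x.
Proof.
  intros. unfold clamp. apply (cont_max lo (fun s => Rmin (f s) (hi s))); auto.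
  apply cont_min; auto.
Qed.

Lemma cont_1m x : continuous (fun s => 1 - s) x.
Proof. apply (continuous_ext (fun t => 1 + -1*t)). intros t. assert (E: 1 + -1*t = 1 - t) by ring. exact E. apply cont_aff. Qed.

Lemma cont_lin_div c0 c1 c2 x : c2 <> 0 -> continuous (fun s => -(c0+c1*s)/c2) x.
Proof. intros H. apply (continuous_ext (fun t => (-c0/c2) + (-c1/c2)*t)). intros t.
  assert (E: (-c0/c2) + (-c1/c2)*t = -(c0+c1*t)/c2) by (field; auto). exact E. apply cont_aff. Qed.

Lemma ex_Ofun c0 c1 c2 : ex_RInt (Ofun c0 c1 c2) 0 1.
Proof.
  destruct (Req_dec c2 0) as [H2|H2].
  - subst c2. apply (ex_RInt_ext (fun s => ind (c0 + c1*s) * (1 - s))).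
    + intros x Hx. rewrite Rmin_left in Hx by lra. rewrite Rmax_right in Hx by lra.
      unfold Ofun. rewrite (RInt_ext _ (fun _ => ind (c0 + c1*x))).
      rewrite RInt_const. unfold scal; simpl; unfold mult; simpl. ring.
      intros; f_equal; ring.
    + apply ex_ind_h. lra. intros; apply (cont_aff 1 (-1)) || apply cont_1m.
  - apply (ex_RInt_ext (fun s => mI (c0 + c1*s) c2 0 (1-s))).
    + intros x Hx. rewrite Rmin_left in Hx by lra. rewrite Rmax_right in Hx by lra.
      unfold Ofun. rewrite RInt_ind; auto. lra.
    + apply ex_cont. intros x. unfold mI. destruct Rlt_dec.
      * apply (continuous_plus (fun s => 1 - s) (fun s => opp (clamp (-(c0+c1*s)/c2) 0 (1-s)))).
        apply cont_1m.
        apply (continuous_opp (fun s => clamp (-(c0+c1*s)/c2) 0 (1-s))).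
        apply (cont_clamp (fun s => -(c0+c1*s)/c2) (fun _ => 0) (fun s => 1 - s)).
        apply cont_lin_div; auto.
        apply continuous_const.
        apply cont_1m.
      * apply (continuous_plus (fun s => clamp (-(c0+c1*s)/c2) 0 (1-s)) (fun s => opp 0)).
        apply (cont_clamp (fun s => -(c0+c1*s)/c2) (fun _ => 0) (fun s => 1 - s)).
        apply cont_lin_div; auto.
        apply continuous_const.
        apply cont_1m.
        apply continuous_const.
Qed.

Ltac Rring := match goal with |- ?a = ?b => change (@eq R a b); ring end.

Lemma p1_ext (p q : P1) : (forall x, p1eval p x = p1eval q x) -> p = q.
Proof.
  destruct p as [c [g1 g2]], q as [c' [g1' g2']]. unfold p1eval, v2dot; simpl. intros H.
  assert (H0 := H (0,0)). assert (H1 := H (1,0)). assert (H2 := H (0,1)). simpl in *.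
  assert (c = c') by lra. assert (g1 = g1') by lra. assert (g2 = g2') by lra. subst. reflexivity.
Qed.

Definition midpt (P Q : vec) : vec := v2scal (1/2) (v2add P Q).

Lemma RInt_lin2 (f h : R -> R) a b c1 c2 : ex_RInt f a b -> ex_RInt h a b ->
  RInt (fun x => c1 * f x + c2 * h x) a b = c1 * RInt f a b + c2 * RInt h a b.
Proof.
  intros Hf Hh.
  assert (H := is_RInt_plus _ _ _ _ _ _ (is_RInt_scal _ _ _ c1 _ (RInt_correct _ _ _ Hf))
                 (is_RInt_scal _ _ _ c2 _ (RInt_correct _ _ _ Hh))).
  apply (is_RInt_unique (V:=R_CompleteNormedModule)). exact H.
Qed.

Lemma edge_mean_P1 (P Q : vec) (p : P1) (c : R) (h : vec -> R) :
  ex_RInt (fun t => h (v2add P (v2scal t (v2sub Q P)))) 0 1 ->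
  edge_mean (P,Q) (fun y => p1eval p y + c * h y) = p1eval p (midpt P Q) + c * edge_mean (P,Q) h.
Proof.
  intros Hh. unfold edge_mean; simpl.
  set (al := p1eval p P). set (be := v2dot (p1g p) (v2sub Q P)).
  rewrite (RInt_ext _ (fun t => 1 * (al + be*t) + c * h (v2add P (v2scal t (v2sub Q P))))).
  - rewrite RInt_lin2. rewrite RInt_aff.
    + match goal with |- _ + c * ?X = _ + c * ?Y => change X with Y end.
      unfold al, be, midpt, p1eval, v2dot, v2sub, v2add, v2scal. destruct P, Q, p as [c0 [g1 g2]]. simpl. field.
    + apply ex_cont. intros; apply cont_aff.
    + exact Hh.
  - intros x _. unfold al, be, p1eval, v2dot, v2sub, v2add, v2scal. destruct P, Q, p as [c0 [g1 g2]]. simpl. ring.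
Qed.

Lemma wfun_max g y : wfun g y = Rmax (v2dot (gn g) y - gd g) 0.
Proof.
  unfold wfun, pw. destruct Rlt_dec.
  - rewrite Rabs_right by lra. rewrite Rmax_left; lra.
  - rewrite Rmax_right; lra.
Qed.

Definition fv g (x : vec) := v2dot (gn g) x - gd g.

Lemma wfun_edge g P Q t : wfun g (v2add P (v2scal t (v2sub Q P))) =
  Rmax (fv g P + (fv g Q - fv g P) * t) 0.
Proof.
  rewrite wfun_max. f_equal. unfold fv, v2dot, v2add, v2scal, v2sub. destruct P, Q, (gn g). simpl. ring.
Qed.

Lemma edge_mean_w g P Q : edge_mean (P,Q) (wfun g) = psi (fv g P) (fv g Q).
Proof.
  unfold edge_mean, psi; simpl. apply RInt_ext. intros. apply wfun_edge.
Qed.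

Lemma ex_w_edge g P Q : ex_RInt (fun t => wfun g (v2add P (v2scal t (v2sub Q P)))) 0 1.
Proof.
  apply (ex_RInt_ext (fun t => Rmax (fv g P + (fv g Q - fv g P) * t) 0)).
  intros; symmetry; apply wfun_edge. apply ex_rmaxaff.
Qed.

Lemma edge_mean_Pw (P Q : vec) g (p : P1) (c : R) :
  edge_mean (P,Q) (fun y => p1eval p y + c * wfun g y) = p1eval p (midpt P Q) + c * psi (fv g P) (fv g Q).
Proof. rewrite edge_mean_P1. rewrite edge_mean_w. auto. apply ex_w_edge. Qed.

Lemma edge_mean_ext e f h : (forall x, f x = h x) -> edge_mean e f = edge_mean e h.
Proof. intros H. unfold edge_mean. apply RInt_ext. intros; apply H. Qed.

Lemma edge_mean_P1' (P Q : vec) (p : P1) :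
  edge_mean (P,Q) (p1eval p) = p1eval p (midpt P Q).
Proof.
  rewrite (edge_mean_ext _ _ (fun y => p1eval p y + 0 * (fun _ => 0) y)).
  rewrite edge_mean_P1. ring. apply ex_cont; intros; apply continuous_const.
  intros; ring.
Qed.

Definition M1 g := midpt (gA2 g) (gA3 g).
Definition M2 g := midpt (gA3 g) (gA1 g).
Definition M3 g := midpt (gA1 g) (gA2 g).

Lemma lam_mid g lam : is_CR_basis g lam ->
  p1eval (lam 1%nat) (M1 g) = 1 /\ p1eval (lam 1%nat) (M2 g) = 0 /\ p1eval (lam 1%nat) (M3 g) = 0 /\
  p1eval (lam 2%nat) (M1 g) = 0 /\ p1eval (lam 2%nat) (M2 g) = 1 /\ p1eval (lam 2%nat) (M3 g) = 0 /\
  p1eval (lam 3%nat) (M1 g) = 0 /\ p1eval (lam 3%nat) (M2 g) = 0 /\ p1eval (lam 3%nat) (M3 g) = 1.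
Proof.
  intros H. unfold M1, M2, M3.
  repeat rewrite <- edge_mean_P1'.
  repeat split;
  match goal with |- edge_mean (?P,?Q) (p1eval (lam ?i)) = _ =>
    first [ apply (H i 1%nat) | apply (H i 2%nat) | apply (H i 3%nat) ]; lia
  end.
Qed.

Lemma P1_mid_zero g (p : P1) : tri_nondeg g ->
  p1eval p (M1 g) = 0 -> p1eval p (M2 g) = 0 -> p1eval p (M3 g) = 0 ->
  forall x, p1eval p x = 0.
Proof.
  unfold tri_nondeg, M1, M2, M3, midpt, p1eval, v2dot, v2add, v2scal, v2sub.
  destruct g as [[x1 y1] [x2 y2] [x3 y3] n d], p as [c [a b]]; simpl.
  intros HT H1 H2 H3 [x y]; simpl.
  assert (Hu : a*(x2-x1) + b*(y2-y1) = 0) by lra.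
  assert (Hw : a*(x3-x1) + b*(y3-y1) = 0) by lra.
  assert (Ea : a * ((x2-x1)*(y3-y1) - (y2-y1)*(x3-x1)) = 0).
  { replace (a * ((x2-x1)*(y3-y1) - (y2-y1)*(x3-x1))) with
      ((a*(x2-x1) + b*(y2-y1))*(y3-y1) - (a*(x3-x1) + b*(y3-y1))*(y2-y1)) by ring.
    rewrite Hu, Hw; ring. }
  assert (Eb : b * ((x2-x1)*(y3-y1) - (y2-y1)*(x3-x1)) = 0).
  { replace (b * ((x2-x1)*(y3-y1) - (y2-y1)*(x3-x1))) with
      (-(a*(x2-x1) + b*(y2-y1))*(x3-x1) + (a*(x3-x1) + b*(y3-y1))*(x2-x1)) by ring.
    rewrite Hu, Hw; ring. }
  apply Rmult_integral in Ea. apply Rmult_integral in Eb.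
  destruct Ea as [Ea|Ea]; [|contradiction]. destruct Eb as [Eb|Eb]; [|contradiction].
  subst a b. lra.
Qed.

Definition crI (lam : nat -> P1) (m1 m2 m3 : R) : P1 :=
  p1add (p1scal m1 (lam 1%nat)) (p1add (p1scal m2 (lam 2%nat)) (p1add (p1scal m3 (lam 3%nat)) p1zero)).

Lemma crI_eval lam m1 m2 m3 x : p1eval (crI lam m1 m2 m3) x =
  m1 * p1eval (lam 1%nat) x + m2 * p1eval (lam 2%nat) x + m3 * p1eval (lam 3%nat) x.
Proof. unfold crI, p1eval, p1add, p1scal, p1zero, v2dot, v2add, v2scal; simpl. ring. Qed.

Lemma CR_repr g lam (p : P1) : tri_nondeg g -> is_CR_basis g lam ->
  crI lam (p1eval p (M1 g)) (p1eval p (M2 g)) (p1eval p (M3 g)) = p.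
Proof.
  intros HT HL. apply p1_ext. intros x.
  destruct (lam_mid g lam HL) as (L11 & L12 & L13 & L21 & L22 & L23 & L31 & L32 & L33).
  set (r := p1add p (p1scal (-1) (crI lam (p1eval p (M1 g)) (p1eval p (M2 g)) (p1eval p (M3 g))))).
  assert (Hr : forall y, p1eval r y = p1eval p y - p1eval (crI lam (p1eval p (M1 g)) (p1eval p (M2 g)) (p1eval p (M3 g))) y).
  { intros y. unfold r. unfold p1eval, p1add, p1scal, v2dot, v2add, v2scal; simpl. ring. }
  assert (H := P1_mid_zero g r HT).
  rewrite !Hr, !crI_eval in H.
  rewrite L11, L12, L13, L21, L22, L23, L31, L32, L33 in H.
  specialize (H ltac:(ring) ltac:(ring) ltac:(ring) x).
  rewrite Hr, crI_eval in H. rewrite crI_eval. lra.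
Qed.

Definition cc0 g := v2dot (gn g) (gA1 g) - gd g.
Definition cc1 g := v2dot (gn g) (v2sub (gA2 g) (gA1 g)).
Definition cc2 g := v2dot (gn g) (v2sub (gA3 g) (gA1 g)).

Lemma F_tri g s t : v2dot (gn g) (tri_map g s t) - gd g = (cc0 g + cc1 g * s) + cc2 g * t.
Proof.
  unfold cc0, cc1, cc2, tri_map, v2dot, v2add, v2sub, v2scal.
  destruct g as [[x1 y1] [x2 y2] [x3 y3] [n1 n2] d]; simpl. ring.
Qed.

Lemma Gamma_two g : tri_nondeg g -> v2dot (gn g) (gn g) = 1 ->
  (exists x, in_Tp g x) -> (exists x, in_Tm g x) ->
  exists X Y, on_Gamma g X /\ on_Gamma g Y /\ v2dot (tangent g) (v2sub X Y) <> 0.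
Proof.
  intros HT Hn [xp [[s1 [t1 (Hs1 & Ht1 & Hst1 & E1)]] Hp]] [xm [[s2 [t2 (Hs2 & Ht2 & Hst2 & E2)]] Hm]].
  subst xp xm.
  assert (F1 := F_tri g s1 t1). assert (F2 := F_tri g s2 t2).
  set (c0 := cc0 g) in *. set (c1 := cc1 g) in *. set (c2 := cc2 g) in *.
  set (f1 := c0 + c1*s1 + c2*t1) in *. set (f2 := c0 + c1*s2 + c2*t2) in *.
  assert (Hf1 : 0 < f1) by lra. assert (Hf2 : f2 < 0) by lra.
  set (l := f2/(f2-f1)).
  assert (Hl : l*(f2-f1) = f2) by (unfold l; field; lra).
  assert (Hl0 : 0 < l) by nra. assert (Hl1 : l < 1) by nra.
  set (s0 := s2 + l*(s1-s2)). set (t0 := t2 + l*(t1-t2)).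
  assert (Hs0 : 0 < s0) by (unfold s0; nra).
  assert (Ht0 : 0 < t0) by (unfold t0; nra).
  assert (Hst0 : s0 + t0 < 1) by (unfold s0, t0; nra).
  assert (Hf0 : c0 + c1*s0 + c2*t0 = 0).
  { assert (E: c0 + c1*s0 + c2*t0 = f2 - l*(f2-f1)) by (unfold s0, t0, f1, f2; ring). lra. }
  set (m := Rmin s0 (Rmin t0 (1 - s0 - t0))).
  assert (Hm0 : 0 < m) by (unfold m; repeat apply Rmin_pos; lra).
  assert (Hms : m <= s0) by (unfold m; apply Rmin_l).
  assert (Hmt : m <= t0) by (unfold m; eapply Rle_trans; [apply Rmin_r| apply Rmin_l]).
  assert (Hmst : m <= 1 - s0 - t0) by (unfold m; eapply Rle_trans; [apply Rmin_r| apply Rmin_r]).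
  set (K := Rabs c1 + Rabs c2 + 1).
  assert (HK : 0 < K) by (unfold K; assert (H1 := Rabs_pos c1); assert (H2 := Rabs_pos c2); lra).
  set (e := m/(2*K)).
  assert (He : e * K = m/2) by (unfold e; field; lra).
  assert (He0 : 0 < e) by (unfold e; apply Rdiv_lt_0_compat; lra).
  assert (Ha1 : e * Rabs c1 + e * Rabs c2 <= m/2).
  { assert (e * 1 > 0) by lra. unfold K in He. lra. }
  assert (Hc1 : - (e * Rabs c1) <= e*c1 <= e * Rabs c1).
  { assert (H1 := Rle_abs c1). assert (H2 := Rle_abs (-c1)). rewrite Rabs_Ropp in H2. split; nra. }
  assert (Hc2 : - (e * Rabs c2) <= e*c2 <= e * Rabs c2).
  { assert (H1 := Rle_abs c2). assert (H2 := Rle_abs (-c2)). rewrite Rabs_Ropp in H2. split; nra. }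
  exists (tri_map g s0 t0), (tri_map g (s0 + e*c2) (t0 - e*c1)).
  split; [|split].
  - split. exists s0, t0. repeat split; auto. 
    assert (H := F_tri g s0 t0). fold c0 c1 c2 in H. lra.
  - split. exists (s0 + e*c2), (t0 - e*c1). repeat split; auto; lra.
    assert (H := F_tri g (s0 + e*c2) (t0 - e*c1)). fold c0 c1 c2 in H. nra.
  - assert (Hid : v2dot (tangent g) (v2sub (tri_map g s0 t0) (tri_map g (s0 + e*c2) (t0 - e*c1)))
       = - e * (let u := v2sub (gA2 g) (gA1 g) in let w := v2sub (gA3 g) (gA1 g) in
       fst u * snd w - snd u * fst w) * v2dot (gn g) (gn g)).
    { unfold c1, c2, cc1, cc2, tangent, rot_cw, tri_map, v2dot, v2add, v2sub, v2scal.
      destruct g as [[x1 y1] [x2 y2] [x3 y3] [n1 n2] d]; simpl. ring. }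
    rewrite Hid, Hn. unfold tri_nondeg in HT.
    rewrite Rmult_1_r. apply Rmult_integral_contrapositive; split; [lra|exact HT].
Qed.

Lemma Gamma_line g (c : R) (gam : vec) : tri_nondeg g -> v2dot (gn g) (gn g) = 1 ->
  (exists x, in_Tp g x) -> (exists x, in_Tm g x) ->
  (forall x, on_Gamma g x -> c + v2dot gam x = 0) ->
  gam = v2scal (v2dot gam (gn g)) (gn g) /\ c = - v2dot gam (gn g) * gd g.
Proof.
  intros HT Hn Hp Hm H.
  destruct (Gamma_two g HT Hn Hp Hm) as (X & Y & HX & HY & HXY).
  assert (EX := H X HX). assert (EY := H Y HY).
  destruct HX as [_ NX]. destruct HY as [_ NY].
  revert Hn EX EY NX NY HXY. unfold tangent, rot_cw, v2dot, v2sub, v2scal.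
  destruct g as [A1 A2 A3 [n1 n2] d], gam as [a b], X as [X1 X2], Y as [Y1 Y2]; simpl.
  intros Hn EX EY NX NY HXY.
  assert (Ht : (a*n2 - b*n1) * (n2*(X1-Y1) + - n1*(X2-Y2)) =
    (n1*n1+n2*n2)*(a*(X1-Y1)+b*(X2-Y2)) - (a*n1+b*n2)*(n1*(X1-Y1)+n2*(X2-Y2))) by ring.
  assert (Ht0 : a*n2 - b*n1 = 0).
  { assert (HD : a*(X1-Y1)+b*(X2-Y2) = 0) by lra. assert (HN : n1*(X1-Y1)+n2*(X2-Y2) = 0) by lra.
    rewrite HD, HN, Rmult_0_r, Rmult_0_r, Rminus_0_r in Ht. apply Rmult_integral in Ht. destruct Ht as [Ht|Ht]; [exact Ht|].
    exfalso; apply HXY. rewrite <- Ht. ring. }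
  assert (Ea : a = (a*n1+b*n2)*n1).
  { replace a with (a*(n1*n1+n2*n2)) at 1 by (rewrite Hn; ring).
    replace (a * (n1 * n1 + n2 * n2)) with ((a*n1+b*n2)*n1 + (a*n2 - b*n1)*n2) by ring.
    rewrite Ht0; ring. }
  assert (Eb : b = (a*n1+b*n2)*n2).
  { replace b with (b*(n1*n1+n2*n2)) at 1 by (rewrite Hn; ring).
    replace (b * (n1 * n1 + n2 * n2)) with ((a*n1+b*n2)*n2 - (a*n2 - b*n1)*n1) by ring.
    rewrite Ht0; ring. }
  split.
  - rewrite <- Ea, <- Eb. reflexivity.
  - set (be := a*n1+b*n2) in *. rewrite Ea, Eb in EX.
    replace (be * n1 * X1 + be * n2 * X2) with (be * (n1*X1 + n2*X2)) in EX by ring.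
    rewrite NX in EX. lra.
Qed.

Definition fP g : P1 := mkP1 (- gd g) (gn g).

Lemma key_vp g mup mum (D : ife) : tri_nondeg g -> v2dot (gn g) (gn g) = 1 ->
  (exists x, in_Tp g x) -> (exists x, in_Tm g x) -> in_IFE g mup mum D ->
  exists al, vp D = (p1add (fst (vm D)) (p1scal (al * snd (gn g)) (fP g)),
                     p1add (snd (vm D)) (p1scal (-(al * fst (gn g))) (fP g))).
Proof.
  intros HT Hn Hp Hm (Hs & Hi & Hd).
  destruct D as [[[a1 [g11 g12]] [a2 [g21 g22]]] [[b1 [h11 h12]] [b2 [h21 h22]]] qp qm]. simpl in *.
  assert (L1 := Gamma_line g (a1 - b1) (g11 - h11, g12 - h12) HT Hn Hp Hm).
  assert (L2 := Gamma_line g (a2 - b2) (g21 - h21, g22 - h22) HT Hn Hp Hm).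
  destruct L1 as [L1a L1b].
  { intros x Hx. specialize (Hi x Hx). unfold p1veval, p1eval, v2dot in *; simpl in *.
    injection Hi; intros; lra. }
  destruct L2 as [L2a L2b].
  { intros x Hx. specialize (Hi x Hx). unfold p1veval, p1eval, v2dot in *; simpl in *.
    injection Hi; intros; lra. }
  revert Hn L1a L1b L2a L2b Hd. unfold fP, p1vdiv, p1grad, p1add, p1scal, v2scal, v2add, v2dot.
  destruct g as [A1 A2 A3 [n1 n2] d]; simpl.
  intros Hn L1a L1b L2a L2b Hd.
  set (be1 := (g11 - h11) * n1 + (g12 - h12) * n2) in *.
  set (be2 := (g21 - h21) * n1 + (g22 - h22) * n2) in *.
  injection L1a; intros E12 E11. injection L2a; intros E22 E21.
  assert (Hdiv : be1 * n1 + be2 * n2 = 0) by lra.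
  exists (be1 * n2 - be2 * n1).
  assert (F1 : be1 = (be1 * n2 - be2 * n1) * n2).
  { replace be1 with (be1 * (n1*n1+n2*n2)) at 1 by (rewrite Hn; ring).
    replace (be1 * (n1*n1+n2*n2)) with ((be1 * n2 - be2 * n1) * n2 + (be1 * n1 + be2 * n2)*n1) by ring.
    rewrite Hdiv; ring. }
  assert (F2 : be2 = - ((be1 * n2 - be2 * n1) * n1)).
  { replace be2 with (be2 * (n1*n1+n2*n2)) at 1 by (rewrite Hn; ring).
    replace (be2 * (n1*n1+n2*n2)) with (- ((be1 * n2 - be2 * n1) * n1) + (be1 * n1 + be2 * n2)*n2) by ring.
    rewrite Hdiv; ring. }
  set (al := be1 * n2 - be2 * n1) in *.
  rewrite <- F1, <- F2.
  f_equal; f_equal; [lra| f_equal; lra | lra | f_equal; lra].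
Qed.

Lemma tri_mean_ind g (q0 de : R) (f : vec -> R) :
  (forall y, f y = q0 + de * ind (v2dot (gn g) y - gd g)) ->
  tri_mean g f = q0 + de * (2 * RInt (Ofun (cc0 g) (cc1 g) (cc2 g)) 0 1).
Proof.
  intros Hf. unfold tri_mean.
  rewrite (RInt_ext _ (fun s => q0 * (1 + -1 * s) + de * Ofun (cc0 g) (cc1 g) (cc2 g) s)).
  - rewrite RInt_lin2.
    + rewrite RInt_aff. field.
    + apply ex_cont; intros; apply cont_aff.
    + apply ex_Ofun.
  - intros s Hs. rewrite Rmin_left in Hs by lra. rewrite Rmax_right in Hs by lra.
    rewrite (RInt_ext _ (fun t => q0 * 1 + de * ind ((cc0 g + cc1 g * s) + cc2 g * t))).
    + rewrite RInt_lin2.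
      * rewrite RInt_const. unfold Ofun. unfold scal; simpl; unfold mult; simpl. ring.
      * apply ex_cont; intros; apply continuous_const.
      * apply ex_ind. lra.
    + intros t _. rewrite Hf, F_tri. Rring.
Qed.

Lemma vfun_repr g (D : ife) al : vp D = (p1add (fst (vm D)) (p1scal (al * snd (gn g)) (fP g)),
                     p1add (snd (vm D)) (p1scal (-(al * fst (gn g))) (fP g))) ->
  forall x, vfun g D x = (p1eval (fst (vm D)) x + (al * snd (gn g)) * wfun g x,
                          p1eval (snd (vm D)) x + (-(al * fst (gn g))) * wfun g x).
Proof.
  intros HV x. rewrite wfun_max. unfold vfun, pw. rewrite HV.
  destruct Rlt_dec.
  - rewrite Rmax_left by lra. unfold p1veval, p1eval, p1add, p1scal, fP, v2dot, v2add, v2scal; simpl. f_equal; ring.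
  - rewrite Rmax_right by lra. unfold p1veval. f_equal; ring.
Qed.

Lemma qfun_repr g D x : qfun g D x = qm D + (qp D - qm D) * ind (v2dot (gn g) x - gd g).
Proof. unfold qfun, pw, ind. destruct Rlt_dec, Rlt_dec; lra. Qed.
Lemma zfun_repr g x : zfun g x = 0 + (-1) * ind (v2dot (gn g) x - gd g).
Proof. unfold zfun, pw, ind. destruct Rlt_dec, Rlt_dec; lra. Qed.

Lemma fold_vJ0 (N : nat -> R) lam x :
  p1eval (fst (fold_right (fun i acc => p1vadd (p1vscal (N i) (phi lam i)) acc) p1vzero (List.seq 1 6))) x
   = N 1%nat * p1eval (lam 1%nat) x + N 2%nat * p1eval (lam 2%nat) x + N 3%nat * p1eval (lam 3%nat) x /\
  p1eval (snd (fold_right (fun i acc => p1vadd (p1vscal (N i) (phi lam i)) acc) p1vzero (List.seq 1 6))) x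
   = N 4%nat * p1eval (lam 1%nat) x + N 5%nat * p1eval (lam 2%nat) x + N 6%nat * p1eval (lam 3%nat) x.
Proof.
  simpl. unfold phi; simpl. unfold p1eval, p1add, p1scal, p1zero, v2dot, v2add, v2scal; simpl. split; ring.
Qed.

Lemma piCR_w g lam : piCR g lam (wfun g) =
  crI lam (psi (fv g (gA2 g)) (fv g (gA3 g))) (psi (fv g (gA3 g)) (fv g (gA1 g))) (psi (fv g (gA1 g)) (fv g (gA2 g))).
Proof.
  unfold piCR, crI. simpl. rewrite !edge_mean_w. reflexivity.
Qed.

Lemma p1g_zero (r : P1) : (forall x, p1eval r x = 0) -> p1g r = (0,0).
Proof.
  intros H. assert (E : r = p1zero) by (apply p1_ext; intros; rewrite H; unfold p1eval, p1zero, v2dot; simpl; ring).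
  rewrite E. reflexivity.
Qed.

Lemma signs g : (exists x, in_Tp g x) -> (exists x, in_Tm g x) ->
  (0 < fv g (gA1 g) \/ 0 < fv g (gA2 g) \/ 0 < fv g (gA3 g)) /\
  (fv g (gA1 g) < 0 \/ fv g (gA2 g) < 0 \/ fv g (gA3 g) < 0).
Proof.
  intros [xp [[s1 [t1 (Hs1 & Ht1 & Hst1 & E1)]] Hp]] [xm [[s2 [t2 (Hs2 & Ht2 & Hst2 & E2)]] Hm]].
  subst xp xm.
  assert (F1 := F_tri g s1 t1). assert (F2 := F_tri g s2 t2).
  assert (Ec : forall s t, (cc0 g + cc1 g * s) + cc2 g * t =
     (1 - s - t) * fv g (gA1 g) + s * fv g (gA2 g) + t * fv g (gA3 g)).
  { intros. unfold cc0, cc1, cc2, fv, v2dot, v2sub. destruct g as [[x1 y1] [x2 y2] [x3 y3] [n1 n2] d]; simpl. ring. }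
  rewrite Ec in F1, F2.
  set (f1 := fv g (gA1 g)) in *. set (f2 := fv g (gA2 g)) in *. set (f3 := fv g (gA3 g)) in *.
  split.
  - destruct (Rlt_dec 0 f1); [now left|]. destruct (Rlt_dec 0 f2); [now right; left|].
    destruct (Rlt_dec 0 f3); [now right; right|]. exfalso. nra.
  - destruct (Rlt_dec f1 0); [now left|]. destruct (Rlt_dec f2 0); [now right; left|].
    destruct (Rlt_dec f3 0); [now right; right|]. exfalso. nra.
Qed.

Lemma P_grad g lam : tri_nondeg g -> is_CR_basis g lam ->
  (exists x, in_Tp g x) -> (exists x, in_Tm g x) ->
  exists rho, 0 < rho < 1 /\ p1g (piCR g lam (wfun g)) = v2scal rho (gn g).
Proof.
  intros HT HL Hp Hm.
  destruct (signs g Hp Hm) as [S1 S2].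
  destruct (Pw_all _ _ _ S1 S2) as (rho & C & Hr & W1 & W2 & W3).
  exists rho. split; auto.
  rewrite piCR_w.
  set (P := crI lam _ _ _).
  set (r := p1add P (p1add (p1scal (-rho) (fP g)) (mkP1 (-C) (0,0)))).
  assert (Hr_eval : forall y, p1eval r y = p1eval P y - rho * (v2dot (gn g) y - gd g) - C).
  { intros y. unfold r, p1eval at 1, p1add, p1scal, fP, v2dot, v2add, v2scal; simpl.
    unfold p1eval, v2dot. simpl. ring. }
  destruct (lam_mid g lam HL) as (L11 & L12 & L13 & L21 & L22 & L23 & L31 & L32 & L33).
  assert (Hz := P1_mid_zero g r HT).
  rewrite !Hr_eval in Hz. unfold P in Hz. rewrite !crI_eval in Hz.
  rewrite L11, L12, L13, L21, L22, L23, L31, L32, L33 in Hz.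
  rewrite W1, W2, W3 in Hz.
  assert (Hz' : forall x, p1eval r x = 0).
  { apply Hz; unfold M1, M2, M3, midpt, fv, v2dot, v2add, v2scal;
    destruct g as [[x1 y1] [x2 y2] [x3 y3] [n1 n2] d]; simpl; field. }
  apply p1g_zero in Hz'.
  assert (Eg : p1g r = v2add (p1g P) (v2add (v2scal (-rho) (gn g)) (0,0))) by reflexivity.
  rewrite Hz' in Eg. clearbody P.
  destruct (p1g P) as [G1 G2]. destruct (gn g) as [n1 n2]. unfold v2add, v2scal in *; simpl in *.
  injection Eg; intros. f_equal; lra.
Qed.

Lemma p1eval_add_scal p c q x : p1eval (p1add p (p1scal c q)) x = p1eval p x + c * p1eval q x.
Proof. unfold p1eval, p1add, p1scal, v2dot, v2add, v2scal; simpl. ring. Qed.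

Lemma Ndof_vals g D al : vp D = (p1add (fst (vm D)) (p1scal (al * snd (gn g)) (fP g)),
                     p1add (snd (vm D)) (p1scal (-(al * fst (gn g))) (fP g))) ->
  Ndof g D 1 = p1eval (fst (vm D)) (M1 g) + (al * snd (gn g)) * psi (fv g (gA2 g)) (fv g (gA3 g)) /\
  Ndof g D 2 = p1eval (fst (vm D)) (M2 g) + (al * snd (gn g)) * psi (fv g (gA3 g)) (fv g (gA1 g)) /\
  Ndof g D 3 = p1eval (fst (vm D)) (M3 g) + (al * snd (gn g)) * psi (fv g (gA1 g)) (fv g (gA2 g)) /\
  Ndof g D 4 = p1eval (snd (vm D)) (M1 g) + (-(al * fst (gn g))) * psi (fv g (gA2 g)) (fv g (gA3 g)) /\
  Ndof g D 5 = p1eval (snd (vm D)) (M2 g) + (-(al * fst (gn g))) * psi (fv g (gA3 g)) (fv g (gA1 g)) /\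
  Ndof g D 6 = p1eval (snd (vm D)) (M3 g) + (-(al * fst (gn g))) * psi (fv g (gA1 g)) (fv g (gA2 g)).
Proof.
  intros HV. assert (R := vfun_repr g D al HV).
  change (Ndof g D 1) with (edge_mean (gA2 g, gA3 g) (fun x => fst (vfun g D x))).
  change (Ndof g D 2) with (edge_mean (gA3 g, gA1 g) (fun x => fst (vfun g D x))).
  change (Ndof g D 3) with (edge_mean (gA1 g, gA2 g) (fun x => fst (vfun g D x))).
  change (Ndof g D 4) with (edge_mean (gA2 g, gA3 g) (fun x => snd (vfun g D x))).
  change (Ndof g D 5) with (edge_mean (gA3 g, gA1 g) (fun x => snd (vfun g D x))).
  change (Ndof g D 6) with (edge_mean (gA1 g, gA2 g) (fun x => snd (vfun g D x))).
  rewrite !(edge_mean_ext _ (fun x => fst (vfun g D x)) (fun y => p1eval (fst (vm D)) y + (al * snd (gn g)) * wfun g y))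
    by (intros; rewrite R; reflexivity).
  rewrite !(edge_mean_ext _ (fun x => snd (vfun g D x)) (fun y => p1eval (snd (vm D)) y + (-(al * fst (gn g))) * wfun g y))
    by (intros; rewrite R; reflexivity).
  rewrite !edge_mean_Pw. unfold M1, M2, M3. repeat split.
Qed.

Lemma vJ0_repr g lam D al : tri_nondeg g -> is_CR_basis g lam ->
  vp D = (p1add (fst (vm D)) (p1scal (al * snd (gn g)) (fP g)),
                     p1add (snd (vm D)) (p1scal (-(al * fst (gn g))) (fP g))) ->
  vJ0 g lam D = (p1add (fst (vm D)) (p1scal (al * snd (gn g)) (piCR g lam (wfun g))),
                 p1add (snd (vm D)) (p1scal (-(al * fst (gn g))) (piCR g lam (wfun g)))).
Proof.
  intros HT HL HV.
  destruct (Ndof_vals g D al HV) as (N1 & N2 & N3 & N4 & N5 & N6).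
  assert (HF := fold_vJ0 (Ndof g D) lam).
  change (fold_right (fun i acc => p1vadd (p1vscal (Ndof g D i) (phi lam i)) acc) p1vzero (List.seq 1 6))
    with (vJ0 g lam D) in HF.
  rewrite N1, N2, N3, N4, N5, N6 in HF.
  destruct (vJ0 g lam D) as [V1 V2]. simpl in HF.
  f_equal; apply p1_ext; intros x; destruct (HF x) as [HF1 HF2];
    rewrite p1eval_add_scal, piCR_w, crI_eval.
  - rewrite HF1.
    assert (Ev := f_equal (fun p => p1eval p x) (CR_repr g lam (fst (vm D)) HT HL)).
    simpl in Ev. rewrite crI_eval in Ev. rewrite <- Ev. ring.
  - rewrite HF2.
    assert (Ev := f_equal (fun p => p1eval p x) (CR_repr g lam (snd (vm D)) HT HL)).
    simpl in Ev. rewrite crI_eval in Ev. rewrite <- Ev. ring.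
Qed.

Definition Ent (n1 n2 h11 h12 h21 h22 : R) :=
  (h11*n1 + (h12+h21)/2*n2)*n2 - ((h12+h21)/2*n1 + h22*n2)*n1.
Definition Enn (n1 n2 h11 h12 h21 h22 : R) :=
  (h11*n1 + (h12+h21)/2*n2)*n1 + ((h12+h21)/2*n1 + h22*n2)*n2.

Lemma stress_alg n1 n2 b1 h11 h12 b2 h21 h22 al d mup mum qp qm :
  n1*n1+n2*n2 = 1 ->
  v2sub (mvec (sigma mup (p1add (mkP1 b1 (h11,h12)) (p1scal (al*n2) (mkP1 (-d) (n1,n2))),
                          p1add (mkP1 b2 (h21,h22)) (p1scal (-(al*n1)) (mkP1 (-d) (n1,n2)))) qp) (n1,n2))
        (mvec (sigma mum (mkP1 b1 (h11,h12), mkP1 b2 (h21,h22)) qm) (n1,n2)) = (0,0) ->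
  mup*al = 2*(mum-mup)*Ent n1 n2 h11 h12 h21 h22 /\ qp - qm = 2*(mup-mum)*Enn n1 n2 h11 h12 h21 h22.
Proof.
  intros Hn Hs.
  unfold sigma, epsilon, mscal, madd, mtr, p1vgrad, p1grad, mvec, v2dot, v2sub, p1add, p1scal,
    v2add, v2scal, Defs.mid in Hs. simpl in Hs.
  injection Hs; intros J2 J1.
  match type of J1 with ?e1 = 0 => match type of J2 with ?e2 = 0 =>
    assert (Id1 : e1*n2 - e2*n1 = 2*(mup-mum)*Ent n1 n2 h11 h12 h21 h22 + mup*al*((n1*n1+n2*n2)*(n1*n1+n2*n2)))
      by (unfold Ent; field);
    assert (Id2 : e1*n1 + e2*n2 = 2*(mup-mum)*Enn n1 n2 h11 h12 h21 h22 - (qp-qm)*(n1*n1+n2*n2))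
      by (unfold Enn; field)
  end end.
  rewrite J1, J2, Hn in Id1. rewrite J1, J2, Hn in Id2. split; lra.
Qed.

Lemma cJ_alg n1 n2 b1 h11 h12 b2 h21 h22 al pc rho k :
  let V := (p1add (mkP1 b1 (h11,h12)) (p1scal (al*n2) (mkP1 pc (rho*n1, rho*n2))),
            p1add (mkP1 b2 (h21,h22)) (p1scal (-(al*n1)) (mkP1 pc (rho*n1, rho*n2)))) in
  v2dot (mvec (sigma k V 0) (n1,n2)) (rot_cw (n1,n2)) =
     2*k*Ent n1 n2 h11 h12 h21 h22 + k*al*rho*((n1*n1+n2*n2)*(n1*n1+n2*n2)) /\
  v2dot (mvec (sigma k V 0) (n1,n2)) (n1,n2) = 2*k*Enn n1 n2 h11 h12 h21 h22.
Proof.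
  intros V. unfold V.
  unfold sigma, epsilon, mscal, madd, mtr, p1vgrad, p1grad, mvec, v2dot, v2sub, p1add, p1scal,
    v2add, v2scal, Defs.mid, rot_cw, Ent, Enn. simpl. split; field.
Qed.

Lemma repr g mup mum lam (D : ife) (HT : tri_nondeg g)
  (Hn : v2dot (gn g) (gn g) = 1)
  (HTp : exists x, in_Tp g x)
  (HTm : exists x, in_Tm g x)
  (Hmup : 0 < mup) (Hmum : 0 < mum)
  (Hlam : is_CR_basis g lam) : in_IFE g mup mum D ->
     c2_den g lam mup mum <> 0 /\
     forall x,
       vfun g D x = v2add (p1veval (vJ0 g lam D) x) (v2scal (cJ2 g lam mup mum D) (vJ2 g lam x))
       /\ qfun g D x = qJ0 g D + cJ1 g lam mup mum D * qJ1 g x.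
Proof.
  intros HI.
  destruct (key_vp g mup mum D HT Hn HTp HTm HI) as [al HV].
  destruct (P_grad g lam HT Hlam HTp HTm) as (rho & Hr & HG).
  assert (HJ := vJ0_repr g lam D al HT Hlam HV).
  assert (HS : mup*al = 2*(mum-mup)*Ent (fst (gn g)) (snd (gn g)) (fst (p1g (fst (vm D)))) (snd (p1g (fst (vm D))))
                                         (fst (p1g (snd (vm D)))) (snd (p1g (snd (vm D)))) /\
               qp D - qm D = 2*(mup-mum)*Enn (fst (gn g)) (snd (gn g)) (fst (p1g (fst (vm D)))) (snd (p1g (fst (vm D))))
                                         (fst (p1g (snd (vm D)))) (snd (p1g (snd (vm D))))).
  { destruct HI as (Hs & _ & _). rewrite HV in Hs. clear HJ HG HV.
    destruct D as [vpD [[b1 [h11 h12]] [b2 [h21 h22]]] qp qm]; destruct g as [A1 A2 A3 [n1 n2] d].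
    unfold fP in Hs. cbn [gn gd vm Defs.qp Defs.qm fst snd p1g] in *. unfold v2dot in Hn; cbn [fst snd] in Hn.
    apply (stress_alg n1 n2 b1 h11 h12 b2 h21 h22 al d); auto. }
  set (P := piCR g lam (wfun g)) in *.
  set (k := mum/mup - 1).
  assert (Hk : -1 < k) by (unfold k; assert (0 < mum/mup) by (apply Rdiv_lt_0_compat; lra); lra).
  assert (Hden : c2_den g lam mup mum = 1 + k * rho).
  { unfold c2_den, p1grad. fold P. fold k. rewrite HG. destruct (gn g) as [n1 n2]. unfold v2dot, v2scal in *; simpl in *.
    replace (rho * n1 * n1 + rho * n2 * n2) with (rho * (n1*n1+n2*n2)) by ring. rewrite Hn. ring. }
  assert (Hdp : 0 < 1 + k * rho) by nra.
  assert (Hc2 : cJ2 g lam mup mum D = al).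
  { unfold cJ2. rewrite Hden. fold k. rewrite HJ. unfold tangent.
    clearbody P. destruct P as [pc [G1 G2]]. simpl in HG.
    destruct D as [vpD [[b1 [h11 h12]] [b2 [h21 h22]]] qp qm]; destruct g as [A1 A2 A3 [n1 n2] d].
    cbn [gn gd vm Defs.qp Defs.qm fst snd p1g] in *. unfold v2scal in HG. injection HG; intros E2 E1. subst G1 G2.
    unfold v2dot in Hn; cbn [fst snd] in Hn.
    destruct (cJ_alg n1 n2 b1 h11 h12 b2 h21 h22 al pc rho k) as [C1 _].
    rewrite C1, Hn. destruct HS as [HS _].
    apply (Rmult_eq_reg_r (1 + k*rho)); [|lra].
    field_simplify; [|lra]. unfold k. 
    assert (E : 2 * (mum/mup - 1) * Ent n1 n2 h11 h12 h21 h22 = al).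
    { apply (Rmult_eq_reg_l mup); [|lra]. rewrite HS. field. lra. }
    replace (2 * (mum / mup - 1) * Ent n1 n2 h11 h12 h21 h22 + (mum / mup - 1) * al * rho * (1 * 1))
      with (2 * (mum / mup - 1) * Ent n1 n2 h11 h12 h21 h22 + (mum / mup - 1) * al * rho) by ring.
    rewrite E. ring. }
  assert (Hc1 : cJ1 g lam mup mum D = -(qp D - qm D)).
  { unfold cJ1. rewrite HJ. fold P.
    clearbody P. destruct P as [pc [G1 G2]]. simpl in HG.
    destruct D as [vpD [[b1 [h11 h12]] [b2 [h21 h22]]] qp qm]; destruct g as [A1 A2 A3 [n1 n2] d].
    cbn [gn gd vm Defs.qp Defs.qm fst snd p1g] in *. unfold v2scal in HG. injection HG; intros E2 E1. subst G1 G2.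
    destruct (cJ_alg n1 n2 b1 h11 h12 b2 h21 h22 al pc rho (mum - mup)) as [_ C2].
    rewrite C2. destruct HS as [_ HS]. rewrite HS. ring. }
  assert (Hq7 : Ndof g D 7 = qm D + (qp D - qm D) * (2 * RInt (Ofun (cc0 g) (cc1 g) (cc2 g)) 0 1)).
  { change (Ndof g D 7) with (tri_mean g (qfun g D)). apply tri_mean_ind. intros; apply qfun_repr. }
  assert (Hz : pi0 g (zfun g) = 0 + (-1) * (2 * RInt (Ofun (cc0 g) (cc1 g) (cc2 g)) 0 1)).
  { apply tri_mean_ind. intros; apply zfun_repr. }
  split. rewrite Hden; lra.
  intros x. split.
  - rewrite Hc2, (vfun_repr g D al HV x), HJ. unfold vJ2, p1veval, tangent.
    cbn [fst snd]. rewrite !p1eval_add_scal. fold P. destruct (gn g) as [n1 n2]. unfold v2add, v2scal, rot_cw. simpl.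
    f_equal; ring.
  - unfold qJ0, qJ1. rewrite Hq7, Hz, Hc1, qfun_repr, zfun_repr. ring.
Qed.

Lemma fold_ext g lam (D1 D2 : ife) (l : list nat) :
  (forall i, In i l -> Ndof g D1 i = Ndof g D2 i) ->
  fold_right (fun i acc => p1vadd (p1vscal (Ndof g D1 i) (phi lam i)) acc) p1vzero l =
  fold_right (fun i acc => p1vadd (p1vscal (Ndof g D2 i) (phi lam i)) acc) p1vzero l.
Proof.
  induction l as [|a l IH]; intros H; simpl; auto.
  rewrite H by (left; auto). rewrite IH; auto. intros i Hi; apply H; right; auto.
Qed.

Theorem lemma4p4 (g : geom) (mup mum : R) (lam : nat -> P1)
  (HT : tri_nondeg g)
  (Hn : v2dot (gn g) (gn g) = 1)
  (HTp : exists x, in_Tp g x)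
  (HTm : exists x, in_Tm g x)
  (Hmup : 0 < mup) (Hmum : 0 < mum)
  (Hlam : is_CR_basis g lam) :
  (* unisolvence *)
  (forall D1 D2 : ife, in_IFE g mup mum D1 -> in_IFE g mup mum D2 ->
     (forall i, (1 <= i <= 7)%nat -> Ndof g D1 i = Ndof g D2 i) ->
     forall x, in_Tp g x \/ in_Tm g x ->
       vfun g D1 x = vfun g D2 x /\ qfun g D1 x = qfun g D2 x)
  /\
  (* explicit representation *)
  (forall D : ife, in_IFE g mup mum D ->
     c2_den g lam mup mum <> 0 /\
     forall x, in_Tp g x \/ in_Tm g x ->
       vfun g D x = v2add (p1veval (vJ0 g lam D) x) (v2scal (cJ2 g lam mup mum D) (vJ2 g lam x))
       /\ qfun g D x = qJ0 g D + cJ1 g lam mup mum D * qJ1 g x).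
Proof.
  split.
  - intros D1 D2 H1 H2 HN x _.
    destruct (repr g mup mum lam D1 HT Hn HTp HTm Hmup Hmum Hlam H1) as [_ R1].
    destruct (repr g mup mum lam D2 HT Hn HTp HTm Hmup Hmum Hlam H2) as [_ R2].
    assert (HvJ : vJ0 g lam D1 = vJ0 g lam D2).
    { unfold vJ0. apply fold_ext. intros i Hi. apply HN.
      simpl in Hi. lia. }
    destruct (R1 x) as [A1 B1], (R2 x) as [A2 B2].
    rewrite A1, A2, B1, B2. unfold cJ2, cJ1, qJ0. rewrite HvJ, (HN 7%nat) by lia. split; reflexivity.
  - intros D HD.
    destruct (repr g mup mum lam D HT Hn HTp HTm Hmup Hmum Hlam HD) as [Hd R].
    split; auto.
Qed.
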